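(* Let $X$ be a real Banach space and $\psi:X\to\mathbb{R}$ a continuous convex function with $\psi(0)=0\le\psi(x)$ for all $x\in X$, which is not constant on any line. Let $C=\{x\in X:\psi(x)\le1\}$, and let $(x_n)_{n\in\mathbb{N}}\subset\partial C$ (the boundary of $C$) and $\xi_n\in\partial\psi(x_n)$ be such that $$X\setminus C=\bigcup_{n=1}^\infty\{y\in X:\langle\xi_n,y-x_n\rangle>0\}.$$ Then $\{\xi_n:n\in\mathbb{N}\}$ separates the points of $X$: for every $v\in X\setminus\{0\}$ there is $n$ with $\langle\xi_n,v\rangle\neq0$.
   Context: $\partial\psi(x)=\{\xi\in X^*:\psi(y)\ge\psi(x)+\langle\xi,y-x\rangle \text{ for all } y\in X\}$. ''Not constant on any line'' means there are no $x,v\in X$, $v\neq 0$, with $t\mapsto\psi(x+tv)$ constant on $\mathbb{R}$. *)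

(* Defs.v *)
From Stdlib Require Import Reals.
Open Scope R_scope.

Record NormedSpace := MkNormedSpace {
  carrier :> Type;
  vzero : carrier;
  vadd : carrier -> carrier -> carrier;
  vopp : carrier -> carrier;
  vscal : R -> carrier -> carrier;
  vnorm : carrier -> R;
  vadd_assoc : forall x y z, vadd x (vadd y z) = vadd (vadd x y) z;
  vadd_comm : forall x y, vadd x y = vadd y x;
  vadd_zero : forall x, vadd x vzero = x;
  vadd_opp : forall x, vadd x (vopp x) = vzero;
  vscal_one : forall x, vscal 1 x = x;
  vscal_assoc : forall a b x, vscal a (vscal b x) = vscal (a * b) x;
  vscal_distr_v : forall a x y, vscal a (vadd x y) = vadd (vscal a x) (vscal a y);
  vscal_distr_s : forall a b x, vscal (a + b) x = vadd (vscal a x) (vscal b x);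
  vnorm_zero_iff : forall x, vnorm x = 0 <-> x = vzero;
  vnorm_scal : forall a x, vnorm (vscal a x) = Rabs a * vnorm x;
  vnorm_triangle : forall x y, vnorm (vadd x y) <= vnorm x + vnorm y
}.

Arguments vzero {_}.
Arguments vadd {_} _ _.
Arguments vopp {_} _.
Arguments vscal {_} _ _.
Arguments vnorm {_} _.

Definition vsub {X : NormedSpace} (x y : X) : X := vadd x (vopp y).

Definition complete (X : NormedSpace) : Prop :=
  forall u : nat -> X,
    (forall eps, 0 < eps -> exists N, forall m n, (N <= m)%nat -> (N <= n)%nat ->
        vnorm (vsub (u m) (u n)) < eps) ->
    exists l : X, forall eps, 0 < eps -> exists N, forall n, (N <= n)%nat ->
        vnorm (vsub (u n) l) < eps.

Definition Banach (X : NormedSpace) : Prop := complete X.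

Definition continuous_fun {X : NormedSpace} (f : X -> R) : Prop :=
  forall x eps, 0 < eps -> exists delta, 0 < delta /\
    forall y, vnorm (vsub y x) < delta -> Rabs (f y - f x) < eps.

Definition convex_fun {X : NormedSpace} (f : X -> R) : Prop :=
  forall x y t, 0 <= t <= 1 ->
    f (vadd (vscal t x) (vscal (1 - t) y)) <= t * f x + (1 - t) * f y.

Definition linear_fun {X : NormedSpace} (xi : X -> R) : Prop :=
  (forall x y, xi (vadd x y) = xi x + xi y) /\
  (forall a x, xi (vscal a x) = a * xi x).

Definition in_dual {X : NormedSpace} (xi : X -> R) : Prop :=
  linear_fun xi /\ continuous_fun xi.

Definition in_subdiff {X : NormedSpace} (psi : X -> R) (x : X) (xi : X -> R) : Prop :=
  in_dual xi /\ forall y, psi y >= psi x + xi (vsub y x).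

Definition not_constant_on_lines {X : NormedSpace} (psi : X -> R) : Prop :=
  ~ (exists x v : X, v <> vzero /\
       forall t s : R, psi (vadd x (vscal t v)) = psi (vadd x (vscal s v))).

Definition in_closure {X : NormedSpace} (C : X -> Prop) (x : X) : Prop :=
  forall eps, 0 < eps -> exists y, C y /\ vnorm (vsub y x) < eps.

Definition in_interior {X : NormedSpace} (C : X -> Prop) (x : X) : Prop :=
  exists eps, 0 < eps /\ forall y, vnorm (vsub y x) < eps -> C y.

Definition in_boundary {X : NormedSpace} (C : X -> Prop) (x : X) : Prop :=
  in_closure C x /\ ~ in_interior C x.

(* Main.v *)
Require Import Defs.
From Stdlib Require Import Reals Lra.
Open Scope R_scope.

Lemma conv_line_le (X : NormedSpace) (psi : X -> R) (v : X)
  (Hconv : convex_fun psi) (Hnonneg : forall x : X, 0 <= psi x)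
  (Hb : forall t, psi (vscal t v) <= 1) :
  forall t s, psi (vscal t v) <= psi (vscal s v).
Proof.
  intros t s. destruct (Rle_dec (psi (vscal t v)) (psi (vscal s v))) as [h|h]; auto.
  exfalso. set (d := psi (vscal t v) - psi (vscal s v)).
  assert (hd : 0 < d) by (unfold d; lra).
  set (k := 1 + 2 / d).
  assert (hk : 1 <= k). { unfold k. assert (0 < 2 / d) by (apply Rdiv_lt_0_compat; lra). lra. }
  set (u := s + k * (t - s)).
  assert (ha : 0 <= / k <= 1).
  { split. left; apply Rinv_0_lt_compat; lra.
    rewrite <- Rinv_1. apply Rinv_le_contravar; lra. }
  pose proof (Hconv (vscal u v) (vscal s v) (/ k) ha) as Hc.
  rewrite !vscal_assoc, <- vscal_distr_s in Hc.
  replace (/ k * u + (1 - / k) * s) with t in Hc by (unfold u; field; lra).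
  pose proof (Hb u) as Hu. pose proof (Hnonneg (vscal s v)) as Hs.
  assert (Hkd : k * d = d + 2) by (unfold k; field; lra).
  assert (k * psi (vscal t v) <= psi (vscal u v) + (k - 1) * psi (vscal s v)).
  { apply Rmult_le_compat_l with (r := k) in Hc; [|lra].
    replace (k * (/ k * psi (vscal u v) + (1 - / k) * psi (vscal s v)))
      with (psi (vscal u v) + (k - 1) * psi (vscal s v)) in Hc by (field; lra).
    exact Hc. }
  assert (k * d <= 1).
  { unfold d. nra. }
  lra.
Qed.

Theorem mainTheorem8 (X : NormedSpace) (HX : Banach X) (psi : X -> R)
  (Hcont : continuous_fun psi) (Hconv : convex_fun psi)
  (H0 : psi vzero = 0) (Hnonneg : forall x : X, 0 <= psi x)
  (Hlines : not_constant_on_lines psi)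
  (x : nat -> X) (xi : nat -> X -> R)
  (Hxbd : forall n, in_boundary (fun y : X => psi y <= 1) (x n))
  (Hxi : forall n, in_subdiff psi (x n) (xi n))
  (Hcover : forall y : X, ~ (psi y <= 1) <-> exists n, xi n (vsub y (x n)) > 0) :
  forall v : X, v <> vzero -> exists n, xi n v <> 0.
Proof.
  intros v hv.
  destruct (Classical_Prop.classic (exists n, xi n v <> 0)) as [h|h]; auto.
  exfalso.
  assert (hz : forall n, xi n v = 0).
  { intro n. destruct (Req_dec (xi n v) 0); auto. exfalso; apply h; eauto. }
  assert (Hb : forall t, psi (vscal t v) <= 1).
  { intro t. destruct (Rle_dec (psi (vscal t v)) 1) as [hh|hh]; auto.
    exfalso. apply Hcover in hh. destruct hh as [n hn].
    assert (psi vzero <= 1) by lra.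
    apply (proj2 (Hcover vzero)); [|exact H]. exists n.
    destruct (Hxi n) as [[[Hadd Hsc] _] _].
    unfold vsub in *. rewrite Hadd, Hsc, hz in hn. rewrite Hadd.
    assert (xi n vzero = 0).
    { pose proof (Hadd vzero vzero) as e. rewrite vadd_zero in e. lra. }
    lra. }
  apply Hlines. exists vzero, v. split; auto.
  intros t s.
  assert (e : forall w : X, vadd vzero w = w) by (intro w; rewrite vadd_comm; apply vadd_zero).
  rewrite !e.
  apply Rle_antisym; apply conv_line_le; auto.
Qed.
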